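(* Let $(A,\diamond,\circ,\lambda)$ be a left semi-truss such that $(A,\diamond)$ is a left cancellative semigroup, let $e$ be an idempotent of $(A,\diamond)$, and define $\sigma:A\to A$ by $\sigma(a)=a\circ e$. Write $a\triangleright b:=\lambda(a,b)$. Then: (1) $\sigma(a\circ b)=a\circ\sigma(b)$ for all $a,b\in A$; (2) $\sigma(a\circ b)=\sigma(a)\diamond(a\triangleright\sigma(b))$ for all $a,b\in A$; (3) $\sigma$ is bijective if and only if $(A,\circ)$ has a right identity $n$ and there is $u\in A$ with $e\circ u=u\circ e=n$.
   Context: A left semi-truss $(A,\diamond,\circ,\lambda)$ is a set $A$ with two associative binary operations $\diamond,\circ$ and a function $\lambda:A\times A\to A$ such that $a\circ(b\diamond c)=(a\circ b)\diamond\lambda(a,c)$ for all $a,b,c\in A$. A semigroup $(A,\diamond)$ is left cancellative if $a\diamond b=a\diamond c$ implies $b=c$. *)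

(* Defs.v *)
From mathcomp Require Import ssreflect ssrfun ssrbool.

Definition left_semi_truss (A : Type) (dia circ : A -> A -> A)
  (lam : A -> A -> A) : Prop :=
  associative dia /\ associative circ /\
  (forall a b c : A, circ a (dia b c) = dia (circ a b) (lam a c)).

Definition left_cancellative (A : Type) (dia : A -> A -> A) : Prop :=
  forall a b c : A, dia a b = dia a c -> b = c.

(* Main.v *)
Require Import Defs.
From mathcomp Require Import ssreflect ssrfun ssrbool.

Theorem proposition2p4 (A : Type) (dia circ lam : A -> A -> A) (e : A)
  (Htruss : left_semi_truss A dia circ lam)
  (Hcanc : left_cancellative A dia)
  (He : dia e e = e) :
  let sigma := fun a : A => circ a e in
  (forall a b : A, sigma (circ a b) = circ a (sigma b)) /\
  (forall a b : A, sigma (circ a b) = dia (sigma a) (lam a (sigma b))) /\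
  (bijective sigma <->
     exists n : A, (forall a : A, circ a n = a) /\
       exists u : A, circ e u = n /\ circ u e = n).
Proof.
  move=> sigma.
  case: Htruss => Hd [Hc Hl].
  have Hid : forall x, dia e x = x.
    move=> x; apply: (Hcanc e); by rewrite Hd He.
  have P1 : forall a b : A, sigma (circ a b) = circ a (sigma b).
    move=> a b; rewrite /sigma; by rewrite Hc.
  split; first exact P1.
  split.
    move=> a b; rewrite P1 /sigma -{1}(Hid (circ b e)) Hl //.
  split.
  - case=> g gK Kg.
    have Hn : forall a, circ a (g e) = a.
      move=> a; apply: (can_inj gK).
      by rewrite /sigma -Hc -/(sigma (g e)) Kg.
    exists (g e); split; first exact Hn.
    exists (g (g e)); split.
      apply: (can_inj gK).
      by rewrite P1 !Kg Hn.
    exact: (Kg (g e)).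
  - case=> n [Hn [u [Heu Hue]]].
    exists (fun a => circ a u).
      by move=> a; rewrite /sigma -Hc Heu Hn.
    by move=> a; rewrite /sigma -Hc Hue Hn.
Qed.
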